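(* Suppose $\|\widehat\theta_t-\theta^*\|_{\Sigma_t}\le\beta_t$ for all $t\in[T]$ (with $\|\theta^*\|_2\le L_\theta$). If the underlying MDP has diameter at most $D$, then for each episode $k$ of \texttt{UCMNLK}, $\max_{s\in\mathcal S}V_k(s)-\min_{s\in\mathcal S}V_k(s)\le D$.
   Context: Setting as for \texttt{UCMNLK}: finite $\mathcal S,\mathcal A$, reward $r\in[0,1]$, true transitions $p(s'\mid s,a,\theta^* )$ of MNL form $p(s'\mid s,a,\theta)=\exp(\varphi(s,a,s')^\top\theta)/\sum_{s''\in\mathcal S_{s,a}}\exp(\varphi(s,a,s'')^\top\theta)$ on known sets $\mathcal S_{s,a}$. $\mathcal P_t$ is the confidence polytope: all $p\in[0,1]^{\mathcal S\times\mathcal A\times\mathcal S}$ with $\sum_{s'\in\mathcal S_{s,a}}p_{s,a,s'}=1$ and $\sum_{s'\in\mathcal S_{s,a}}|p_{s,a,s'}-p(s'\mid s,a,\widehat\theta_t)|\le\beta_t\sum_{s'}p(s'\mid s,a,\widehat\theta_t)\|\varphi(s,a,s')-\sum_{s''}p(s''\mid s,a,\widehat\theta_t)\varphi(s,a,s'')\|_{\Sigma_t^{-1}}+3\beta_t^2\max_{s'}\|\varphi(s,a,s')\|^2_{\Sigma_t^{-1}}$ for all $(s,a)$, where $\widehat\theta_t,\Sigma_t$ are the online estimator's iterates. $Q_k$ is the output of \texttt{DEVI}$(\gamma,\mathcal P_{t_k},N)$ ($Q^{(0)}\equiv1/(1-\gamma)$; $V^{(n-1)}(s)=\max_aQ^{(n-1)}(s,a)$;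 $Q^{(n)}(s,a)=r(s,a)+\gamma\max_{p\in\mathcal P_{t_k}}\sum_{s'\in\mathcal S_{s,a}}p_{s,a,s'}V^{(n-1)}(s')$; $Q_k=Q^{(N)}$), with $\gamma\in[0,1)$, and $V_k(s)=\max_aQ_k(s,a)$. Diameter of the MDP: $\max_{s\ne s'}\min_{\pi}\mathbb E[\text{number of steps to first reach }s'\text{ from }s\text{ under deterministic stationary }\pi]$. *)

(* Defs.v *)
From HB Require Import structures.
From mathcomp Require Import all_boot all_order all_algebra.
From mathcomp Require Import all_classical all_reals all_analysis.
Set Implicit Arguments. Unset Strict Implicit. Unset Printing Implicit Defensive.
Import Order.TTheory GRing.Theory Num.Theory.
Local Open Scope ring_scope.

Section UCMNLK.
Context {R : realType} {S A : finType} {d : nat}.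

Definition dotv (u v : 'cV[R]_d) : R := (u^T *m v) 0 0.

Definition mnorm (M : 'M[R]_d) (x : 'cV[R]_d) : R := Num.sqrt ((x^T *m M *m x) 0 0).

Definition norm2 (x : 'cV[R]_d) : R := Num.sqrt (dotv x x).

Definition posdef (M : 'M[R]_d) : Prop :=
  M^T = M /\ forall x : 'cV[R]_d, x != 0 -> 0 < (x^T *m M *m x) 0 0.

Definition mnl (phi : S -> A -> S -> 'cV[R]_d) (Sset : S -> A -> {set S})
  (theta : 'cV[R]_d) (s : S) (a : A) (s' : S) : R :=
  if s' \in Sset s a then
    expR (dotv (phi s a s') theta) /
      \sum_(s'' in Sset s a) expR (dotv (phi s a s'') theta)
  else 0.

Definition in_polytope (phi : S -> A -> S -> 'cV[R]_d) (Sset : S -> A -> {set S})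
  (thetahat : 'cV[R]_d) (Sigma : 'M[R]_d) (beta : R) (p : S -> A -> S -> R) : Prop :=
  (forall s a s', 0 <= p s a s' <= 1) /\
  forall s a,
    \sum_(s' in Sset s a) p s a s' = 1 /\
    \sum_(s' in Sset s a) `|p s a s' - mnl phi Sset thetahat s a s'|
      <= beta * \sum_(s' in Sset s a) mnl phi Sset thetahat s a s' *
              mnorm (invmx Sigma)
                (phi s a s' - \sum_(s'' in Sset s a) mnl phi Sset thetahat s a s'' *: phi s a s'')
         + 3 * beta ^+ 2 *
           \big[Num.max/0]_(s' in Sset s a) (mnorm (invmx Sigma) (phi s a s')) ^+ 2.

Fixpoint devi_Q (r : S -> A -> R) (Sset : S -> A -> {set S})
  (P : (S -> A -> S -> R) -> Prop) (gamma : R) (n : nat) : S -> A -> R :=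
  match n with
  | 0 => fun _ _ => 1 / (1 - gamma)
  | n'.+1 =>
      let V := fun s => \big[Num.max/0]_(a : A) devi_Q r Sset P gamma n' s a in
      fun s a => r s a + gamma *
        sup [set x : R | exists p, P p /\ x = \sum_(s' in Sset s a) p s a s' * V s']
  end.

Definition devi_V (r : S -> A -> R) (Sset : S -> A -> {set S})
  (P : (S -> A -> S -> R) -> Prop) (gamma : R) (N : nat) (s : S) : R :=
  \big[Num.max/0]_(a : A) devi_Q r Sset P gamma N s a.

(* surv P g n x = Pr_x(X_0,...,X_n all differ from g) for the chain with kernel P *)
Fixpoint surv (P : S -> S -> R) (g : S) (n : nat) (x : S) : R :=
  match n with
  | 0 => if x == g then 0 else 1
  | n'.+1 => if x == g then 0 else \sum_(y : S) P x y * surv P g n' y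
  end.

(* expected first hitting time of g from s: E[tau] = sum_{n>=0} Pr(tau > n) *)
Definition hit_time (P : S -> S -> R) (s g : S) : \bar R :=
  (\sum_(0 <= n <oo) (surv P g n s)%:E)%E.

Definition diameter (ptrue : S -> A -> S -> R) : \bar R :=
  \big[Order.max/0%E]_(s : S) \big[Order.max/0%E]_(g : S | g != s)
    \big[Order.min/+oo%E]_(pi : {ffun S -> A})
       hit_time (fun x y => ptrue x (pi x) y) s g.

End UCMNLK.

(* Main.v *)
Require Import Defs.
From HB Require Import structures.
From mathcomp Require Import all_boot all_order all_algebra.
From mathcomp Require Import all_classical all_reals all_analysis.
From mathcomp Require Import ring lra.
Import Order.TTheory GRing.Theory Num.Theory.
Local Open Scope ring_scope.
Section S1.
Context {R : realType}.

Lemma polyQ (t : R) : 0 <= t -> t <= 41/200 ->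
  0 <= 60 - 600*t + 2310*t^+2 - 4872*t^+3 + 6300*t^+4 - 5160*t^+5 + 2625*t^+6 - 760*t^+7 + 96*t^+8.
Proof. move=> h0 h1. nra. Qed.

Lemma exp_quad (y : R) : 0 <= y -> y ^+ 2 <= 8/3 -> expR y <= 1 + y + 3/2 * y ^+ 2.
Proof.
move=> y0 y2.
have yb : y <= 41/25 by nra.
set t := y / 8.
have t0 : 0 <= t by rewrite /t; lra.
have t1 : t <= 41/200 by rewrite /t; lra.
have hy : y = 8%:R * t by rewrite /t; field.
have e1 : 1 - t <= expR (- t) by have := expR_ge1Dx (- t); lra.
have pos : 0 < 1 - t by lra.
have et : expR t <= (1 - t)^-1.
  rewrite expRN in e1.
  rewrite -[expR t]invrK lef_pV2 ?posrE ?invr_gt0 ?expR_gt0 //.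
rewrite hy expRM_natl.
have : expR t ^+ 8 <= ((1 - t)^-1) ^+ 8.
  apply: lerXn2r => //; rewrite ?nnegrE ?expR_ge0 ?invr_ge0 ?ltW //.
move/le_trans; apply.
rewrite exprVn -div1r ler_pdivrMr ?exprn_gt0 //.
have hQ := @polyQ t t0 t1.
set Q := (X in 0 <= X) in hQ.
have -> : 1 + 8%:R * t + 3 / 2 * (8%:R * t) ^+ 2 = (1 + t^+2 * Q) / (1 - t) ^+ 8.
  rewrite /Q; field; lra.
rewrite mulrVK ?unitfE ?expf_neq0 ?gt_eqF //.
have : 0 <= t^+2 * Q by rewrite mulr_ge0 // sqr_ge0.
lra.
Qed.
Lemma pointwise_u (W y : R) : 1 <= W -> y ^+ 2 <= 8/3 ->
  `|expR y / W - 1| + (expR y / W - 1) <= `|y| + y + 3 * y ^+ 2.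
Proof.
move=> W1 y2.
have W0 : 0 < W by lra.
have ey := expR_gt0 y.
have hle : expR y / W <= expR y.
  by rewrite ler_pdivrMr // ler_peMr // ltW.
have hge : 0 <= expR y / W by rewrite divr_ge0 // ltW.
case: (lerP y 0) => hy.
- have : expR y <= 1 by rewrite expR_le1.
  move=> e1.
  rewrite ler0_norm ?(ler0_norm hy); last lra.
  have := sqr_ge0 y. lra.
- have := exp_quad y (ltW hy) y2.
  have e1 : 1 <= expR y by rewrite -expR0 ler_expR ltW.
  move=> hq.
  rewrite (gtr0_norm hy).
  case: (lerP 0 (expR y / W - 1)) => hu.
  + rewrite ger0_norm //. lra.
  + rewrite ltr0_norm //. lra.
Qed.
Lemma softmax_pert (T : finType) (I : {set T}) (z w : T -> R) (K : R) :
  I != finset.set0 -> (forall i, i \in I -> (w i - z i) ^+ 2 <= K) ->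
  \sum_(i in I) `| expR (w i) / (\sum_(j in I) expR (w j))
                   - expR (z i) / (\sum_(j in I) expR (z j)) |
  <= \sum_(i in I) expR (z i) / (\sum_(j in I) expR (z j)) *
        `| (w i - z i) - \sum_(j in I) expR (z j) / (\sum_(k in I) expR (z k)) * (w j - z j) |
     + 3 * K.
Proof.
move=> /set0Pn [i0 i0I] hK.
set E := \sum_(j in I) expR (z j).
have E0 : 0 < E.
  rewrite /E (bigD1 i0) //=.
  have : 0 <= \sum_(j in I | j != i0) expR (z j) by apply: sumr_ge0 => j _; exact: expR_ge0.
  have := expR_gt0 (z i0). lra.
set p := fun i => expR (z i) / E.
have p0 : forall i, 0 <= p i by move=> i; rewrite /p divr_ge0 ?expR_ge0 ?ltW.
have sp : \sum_(i in I) p i = 1 by rewrite /p -mulr_suml divff ?gt_eqF.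
rewrite -/E.
set x := fun i => w i - z i.
set xb := \sum_(j in I) p j * x j.
set y := fun i => x i - xb.
set W := \sum_(j in I) p j * expR (y j).
have key : forall i, expR (w i) = (E * expR xb) * (p i * expR (y i)).
  move=> i; have -> : w i = z i + (y i + xb) by rewrite /y /x; ring.
  rewrite !expRD /p; field; rewrite gt_eqF //.
have sumw : \sum_(j in I) expR (w j) = (E * expR xb) * W.
  by rewrite /W mulr_sumr; apply: eq_bigr => j _; rewrite key.
have py0 : \sum_(i in I) p i * y i = 0.
  have -> : \sum_(i in I) p i * y i = \sum_(i in I) p i * x i - \sum_(i in I) xb * p i.
    by rewrite -sumrB; apply: eq_bigr => i _ /=; rewrite /y; ring.
  by rewrite -mulr_sumr sp mulr1 subrr.
have W1 : 1 <= W.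
  have : \sum_(i in I) p i * (1 + y i) <= W.
    by apply: ler_sum => i _; rewrite ler_wpM2l // expR_ge1Dx.
  have -> : \sum_(i in I) p i * (1 + y i) = \sum_(i in I) p i + \sum_(i in I) p i * y i.
    by rewrite -big_split; apply: eq_bigr => i _ /=; ring.
  by rewrite sp py0 addr0.
have W0 : 0 < W by lra.
have py2 : \sum_(i in I) p i * y i ^+ 2 + xb ^+ 2 = \sum_(i in I) p i * x i ^+ 2.
  have -> : \sum_(i in I) p i * y i ^+ 2 = \sum_(i in I) p i * x i ^+ 2
         - (2 * xb) * \sum_(i in I) p i * x i + xb ^+ 2 * \sum_(i in I) p i.
    rewrite (eq_bigr (fun i => p i * x i ^+ 2 - (2*xb) * (p i * x i) + xb^+2 * p i)); last by move=> i _; rewrite /y; ring.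
    by rewrite big_split /= sumrB -!mulr_sumr.
  rewrite sp -/xb; ring.
have px2 : \sum_(i in I) p i * x i ^+ 2 <= K.
  have : \sum_(i in I) p i * x i ^+ 2 <= \sum_(i in I) p i * K.
    by apply: ler_sum => i iI; rewrite ler_wpM2l // hK.
  by rewrite -mulr_suml sp mul1r.
have py2ge : 0 <= \sum_(i in I) p i * y i ^+ 2.
  by apply: sumr_ge0 => i _; rewrite mulr_ge0 // sqr_ge0.
set u := fun i => expR (y i) / W - 1.
have lhsE : \sum_(i in I) `| expR (w i) / (E * expR xb * W) - p i |
          = \sum_(i in I) p i * `|u i|.
  apply: eq_bigr => i _; rewrite key /u.
  have -> : E * expR xb * (p i * expR (y i)) / (E * expR xb * W) - p i
          = p i * (expR (y i) / W - 1).
    field; rewrite ?gt_eqF ?expR_gt0 //.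
  by rewrite normrM ger0_norm.
rewrite sumw lhsE.
have pu0 : \sum_(i in I) p i * u i = 0.
  have -> : \sum_(i in I) p i * u i = (\sum_(i in I) p i * expR (y i)) / W - \sum_(i in I) p i.
    rewrite mulr_suml -sumrB; apply: eq_bigr => i _; rewrite /u; field; rewrite gt_eqF //.
  by rewrite -/W divff ?gt_eqF // sp subrr.
have rhs0 : 0 <= \sum_(i in I) p i * `|x i - xb|.
  by apply: sumr_ge0 => i _; rewrite mulr_ge0.
case: (lerP 2 (3 * K)) => hK3.
- have : \sum_(i in I) p i * `|u i| <= \sum_(i in I) p i * (expR (y i) / W + 1).
    apply: ler_sum => i _; rewrite ler_wpM2l // /u.
    apply: (le_trans (ler_normB _ _)); rewrite normr1 ger0_norm // divr_ge0 ?expR_ge0 ?ltW //.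
  have -> : \sum_(i in I) p i * (expR (y i) / W + 1) = (\sum_(i in I) p i * expR (y i)) / W + \sum_(i in I) p i.
    rewrite mulr_suml -big_split; apply: eq_bigr => i _ /=; field; rewrite gt_eqF //.
  rewrite -/W divff ?gt_eqF // sp.
  lra.
- have xb2 : xb ^+ 2 <= K by lra.
  have : \sum_(i in I) p i * `|u i| <= \sum_(i in I) p i * (`|y i| + y i + 3 * y i ^+ 2).
    have -> : \sum_(i in I) p i * `|u i| = \sum_(i in I) p i * (`|u i| + u i).
      have -> : \sum_(i in I) p i * (`|u i| + u i) = \sum_(i in I) p i * `|u i| + \sum_(i in I) p i * u i.
        by rewrite -big_split; apply: eq_bigr => i _ /=; ring.
      by rewrite pu0 addr0.
    apply: ler_sum => i iI; rewrite ler_wpM2l // /u.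
    apply: pointwise_u => //.
    have hx := hK i iI. rewrite -/(x i) in hx.
    rewrite /y. have := sqr_ge0 (x i + xb). nra.
  have -> : \sum_(i in I) p i * (`|y i| + y i + 3 * y i ^+ 2)
      = \sum_(i in I) p i * `|y i| + \sum_(i in I) p i * y i + 3 * \sum_(i in I) p i * y i ^+ 2.
    rewrite mulr_sumr -!big_split; apply: eq_bigr => i _ /=; ring.
  rewrite py0 addr0 => h; apply: (le_trans h).
  change (\sum_(i in I) p i * `|y i| + 3 * \sum_(i in I) p i * y i ^+ 2 <= \sum_(i in I) p i * `|y i| + 3 * K).
  have := sqr_ge0 xb. lra.
Qed.
End S1.
Section LA.
Context {R : realType} {d : nat}.
Implicit Types (M : 'M[R]_d) (a b c : 'cV[R]_d).

Definition fm M a b : R := (a^T *m M *m b) 0 0.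

Lemma fmDl M a b c : fm M (a + b) c = fm M a c + fm M b c.
Proof. by rewrite /fm linearD /= !mulmxDl mxE. Qed.
Lemma fmZl M t a c : fm M (t *: a) c = t * fm M a c.
Proof. by rewrite /fm linearZ /= -!scalemxAl mxE. Qed.
Lemma fmNl M a c : fm M (- a) c = - fm M a c.
Proof. by rewrite -scaleN1r fmZl mulN1r. Qed.
Lemma fmDr M a b c : fm M c (a + b) = fm M c a + fm M c b.
Proof. by rewrite /fm mulmxDr mxE. Qed.
Lemma fmZr M t a c : fm M c (t *: a) = t * fm M c a.
Proof. by rewrite /fm -scalemxAr mxE. Qed.
Lemma fmNr M a c : fm M c (- a) = - fm M c a.
Proof. by rewrite -scaleN1r fmZr mulN1r. Qed.
Lemma fmC M a b : M^T = M -> fm M a b = fm M b a.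
Proof.
move=> hM; rewrite /fm.
have -> : (a^T *m M *m b) 0 0 = ((a^T *m M *m b)^T) 0 0 by rewrite [RHS]mxE.
by rewrite !trmx_mul trmxK hM mulmxA.
Qed.

Lemma posdef_psd M a : posdef M -> 0 <= fm M a a.
Proof.
move=> [_ hp]; case: (eqVneq a 0) => [->|na].
  by rewrite /fm mulmx0 mxE.
exact: ltW (hp _ na).
Qed.

Lemma posdef_unit M : posdef M -> M \in unitmx.
Proof.
move=> [hs hp]; rewrite unitmxE unitfE; apply/negP => /det0P [v nv hv].
have nx : v^T != 0 by rewrite trmx_eq0.
have := hp _ nx; rewrite trmxK hv mul0mx mxE ltxx //.
Qed.

Lemma cs_fm M a b : posdef M -> fm M a b ^+ 2 <= fm M a a * fm M b b.
Proof.
move=> hM; have [hs hp] := hM.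
case: (eqVneq b 0) => [->|nb].
  have -> : fm M a 0 = 0 by rewrite /fm mulmx0 mxE.
  by rewrite expr0n /= mulr_ge0 // posdef_psd.
set A := fm M a a; set B := fm M a b; set C := fm M b b.
have C0 : 0 < C := hp _ nb.
have A0 : 0 <= A := posdef_psd M a hM.
have := posdef_psd M (a - (B / C) *: b) hM.
rewrite fmDl fmNl !fmDr !fmNr !fmZl !fmZr (fmC _ b a hs) -/A -/B -/C.
move=> h.
have : 0 <= A * C - B ^+ 2.
  have -> : A * C - B ^+ 2 = C * (A - B / C * B - (B / C * B - B / C * (B / C * C))).
    field; rewrite gt_eqF //.
  by rewrite mulr_ge0 // ltW.
lra.
Qed.

Lemma cs_dotv M z u : posdef M -> `|dotv z u| <= mnorm (invmx M) z * mnorm M u.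
Proof.
move=> hM; have [hs hp] := hM.
have hu := posdef_unit M hM.
set w := invmx M *m z.
have hw : M *m w = z by rewrite /w mulmxA mulmxV // mul1mx.
have e1 : dotv z u = fm M w u.
  by rewrite /dotv /fm -hw trmx_mul hs.
have e2 : fm (invmx M) z z = fm M w w.
  rewrite /fm -hw trmx_mul hs.
  by rewrite -[w^T *m M *m invmx M]mulmxA mulmxV // mulmx1 mulmxA.
rewrite /mnorm -/(fm _ z z) -/(fm _ u u) e2 e1 -sqrtrM ?posdef_psd //.
rewrite -sqrtr_sqr ler_sqrt ?mulr_ge0 ?posdef_psd //.
exact: cs_fm.
Qed.
End LA.
Section PT.
Context {R : realType} {S A : finType} {d : nat}.
Implicit Types (Sset : S -> A -> {set S}) (th thstar thhat : 'cV[R]_d) (s j : S) (a : A) (beta : R) (Sg : 'M[R]_d).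

Lemma fm_suml (M : 'M[R]_d) (I : {set S}) (F : S -> 'cV[R]_d) c :
  fm M (\sum_(j in I) F j) c = \sum_(j in I) fm M (F j) c.
Proof.
elim/big_rec2: _ => [|j x y _ <-]; last by rewrite fmDl.
by rewrite /fm linear0 !mul0mx mxE.
Qed.

Lemma dotv_fm (a b : 'cV[R]_d) : dotv a b = fm 1%:M a b.
Proof. by rewrite /dotv /fm mulmx1. Qed.

Lemma mnl_in (phi : S -> A -> S -> 'cV[R]_d) Sset th s a j : j \in Sset s a ->
  mnl phi Sset th s a j = expR (dotv (phi s a j) th) / \sum_(k in Sset s a) expR (dotv (phi s a k) th).
Proof. by move=> h; rewrite /mnl h. Qed.
Arguments mnl_in {phi Sset} th {s a j}.

Lemma mnl_sum1 (phi : S -> A -> S -> 'cV[R]_d) Sset th s a : Sset s a != finset.set0 ->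
  \sum_(j in Sset s a) mnl phi Sset th s a j = 1.
Proof.
move=> /set0Pn [i0 i0I].
rewrite (eq_bigr _ (fun j hj => mnl_in th hj)) -mulr_suml divff //.
rewrite gt_eqF // (bigD1 i0) //=.
have : 0 <= \sum_(j in Sset s a | j != i0) expR (dotv (phi s a j) th) by apply: sumr_ge0 => j _; exact: expR_ge0.
have := expR_gt0 (dotv (phi s a i0) th). lra.
Qed.

Lemma mnl_01 (phi : S -> A -> S -> 'cV[R]_d) Sset th s a j :
  0 <= mnl phi Sset th s a j <= 1.
Proof.
rewrite /mnl; case: ifP => hj; last by rewrite lexx ler01.
have e0 := expR_gt0 (dotv (phi s a j) th).
have hle : expR (dotv (phi s a j) th) <= \sum_(k in Sset s a) expR (dotv (phi s a k) th).
  rewrite (bigD1 j) //=.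
  have : 0 <= \sum_(k in Sset s a | k != j) expR (dotv (phi s a k) th) by apply: sumr_ge0 => k _; exact: expR_ge0.
  lra.
have S0 : 0 < \sum_(k in Sset s a) expR (dotv (phi s a k) th) by lra.
apply/andP; split; first by rewrite divr_ge0 ?ltW.
by rewrite ler_pdivrMr // mul1r.
Qed.

Lemma mnorm_ge0 (M : 'M[R]_d) v : 0 <= mnorm M v.
Proof. exact: sqrtr_ge0. Qed.

Lemma pstar_in (phi : S -> A -> S -> 'cV[R]_d) Sset thstar thhat Sg beta :
  (forall s a, Sset s a != finset.set0) -> posdef Sg -> mnorm Sg (thhat - thstar) <= beta ->
  in_polytope phi Sset thhat Sg beta (mnl phi Sset thstar).
Proof.
move=> hne hS hb.
have b0 : 0 <= beta := le_trans (mnorm_ge0 _ _) hb.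
split; first by move=> s a j; exact: mnl_01.
move=> s a; split; first exact: mnl_sum1.
set I := Sset s a.
set z := fun j => dotv (phi s a j) thhat.
set w := fun j => dotv (phi s a j) thstar.
set bm := \big[Num.max/0]_(s' in I) mnorm (invmx Sg) (phi s a s') ^+ 2.
set p := fun j => expR (z j) / \sum_(k in I) expR (z k).
have hK : forall i, i \in I -> (w i - z i) ^+ 2 <= beta ^+ 2 * bm.
  move=> i iI.
  have e : w i - z i = - dotv (phi s a i) (thhat - thstar).
    by rewrite /w /z !dotv_fm fmDr fmNr opprB.
  rewrite e sqrrN -[X in X <= _](ger0_norm (sqr_ge0 _)) normrX.
  have h1 := cs_dotv Sg (phi s a i) (thhat - thstar) hS.
  have h2 : `|dotv (phi s a i) (thhat - thstar)| <= mnorm (invmx Sg) (phi s a i) * beta.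
    by apply: (le_trans h1); rewrite ler_wpM2l // mnorm_ge0.
  have h3 : mnorm (invmx Sg) (phi s a i) ^+ 2 <= bm.
    by rewrite /bm; apply: le_bigmax_cond.
  have h4 : `|dotv (phi s a i) (thhat - thstar)| ^+ 2 <= (mnorm (invmx Sg) (phi s a i) * beta) ^+ 2.
    by apply: lerXn2r; rewrite ?nnegrE ?mulr_ge0 ?mnorm_ge0 //.
  apply: (le_trans h4); rewrite exprMn mulrC; apply: ler_wpM2l => //; exact: sqr_ge0.
have := @softmax_pert R S I z w _ (hne s a) hK.
move=> hsm.
rewrite (eq_bigr (fun j => `|expR (w j) / \sum_(k in I) expR (w k) - expR (z j) / \sum_(k in I) expR (z k)|)); last first.
  by move=> j hj; rewrite (mnl_in thstar hj) (mnl_in thhat hj).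
apply: (le_trans hsm).
rewrite -mulrA [3 * _]mulrA lerD2r mulr_sumr.
apply: ler_sum => i iI.
rewrite (mnl_in thhat iI) -/I mulrCA.
apply: ler_wpM2l; first by rewrite divr_ge0 ?expR_ge0 // sumr_ge0 // => k _; exact: expR_ge0.
have hphib : \sum_(s'' in I) mnl phi Sset thhat s a s'' *: phi s a s'' = \sum_(j in I) p j *: phi s a j.
  by apply: eq_bigr => j hj; rewrite (mnl_in thhat hj).
rewrite hphib.
have hwz : forall j, w j - z j = - dotv (phi s a j) (thhat - thstar).
  by move=> j; rewrite /w /z !dotv_fm fmDr fmNr opprB.
have e : w i - z i - \sum_(j in I) expR (z j) / (\sum_(k in I) expR (z k)) * (w j - z j)
   = - dotv (phi s a i - \sum_(j in I) p j *: phi s a j) (thhat - thstar).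
  rewrite (eq_bigr (fun j => - (p j * dotv (phi s a j) (thhat - thstar)))); last first.
    by move=> j _; rewrite hwz mulrN.
  rewrite sumrN hwz [in RHS]dotv_fm fmDl fmNl fm_suml.
  rewrite [in RHS](eq_bigr (fun j => p j * dotv (phi s a j) (thhat - thstar))); last first.
    by move=> j _; rewrite fmZl -dotv_fm.
  rewrite -dotv_fm; ring.
rewrite e normrN mulrC.
apply: (le_trans (cs_dotv _ _ _ hS)); rewrite ler_wpM2l // mnorm_ge0 //.
Qed.
End PT.
Section DV.
Context {R : realType} {S A : finType}.
Variables (r : S -> A -> R) (Sset : S -> A -> {set S}) (P : (S -> A -> S -> R) -> Prop)
  (gamma : R) (pstar : S -> A -> S -> R).
Hypothesis hr : forall s a, 0 <= r s a <= 1.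
Hypothesis hg : 0 <= gamma < 1.
Hypothesis hP : P pstar.
Hypothesis hp01 : forall p, P p -> forall s a s', 0 <= p s a s' <= 1.
Hypothesis hp1 : forall p, P p -> forall s a, \sum_(s' in Sset s a) p s a s' = 1.
Hypothesis hout : forall s a s', s' \notin Sset s a -> pstar s a s' = 0.

Let Q n := devi_Q r Sset P gamma n.
Let V n s := \big[Num.max/0]_(a : A) Q n s a.
Let Sx (W : S -> R) (s : S) (a : A) := [set x : R | exists p, P p /\ x = \sum_(s' in Sset s a) p s a s' * W s']%classic.

Lemma QS n s a : Q n.+1 s a = r s a + gamma * sup (Sx (V n) s a).
Proof. by []. Qed.

Lemma Sx_ub W s a : has_ubound (Sx W s a).
Proof.
exists (\sum_(s' in Sset s a) `|W s'|); move=> x [p [hp ->]].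
apply: ler_sum => s' _.
have /andP [h0 h1] := hp01 _ hp s a s'.
apply: (le_trans (ler_norm _)); rewrite normrM ger0_norm //.
by rewrite ler_piMl.
Qed.

Lemma Sx_sup W s a p : P p -> \sum_(s' in Sset s a) p s a s' * W s' <= sup (Sx W s a).
Proof. by move=> hp; apply: ub_le_sup; [exact: Sx_ub | exists p]. Qed.

Lemma Sx_le W s a c : (forall p, P p -> \sum_(s' in Sset s a) p s a s' * W s' <= c) ->
  sup (Sx W s a) <= c.
Proof.
move=> h; apply: ge_sup; first by exists (\sum_(s' in Sset s a) pstar s a s' * W s'), pstar.
by move=> x [p [hp ->]]; exact: h.
Qed.

Let c := 1 / (1 - gamma).
Lemma c_ge0 : 0 <= c.
Proof. rewrite /c divr_ge0 //; case/andP: hg => _ h; lra. Qed.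

Lemma V_ge0 n s : 0 <= V n s.
Proof. exact: bigmax_ge_id. Qed.
Lemma Q_le_V n s a : Q n s a <= V n s.
Proof. exact: le_bigmax. Qed.

Lemma Qmono n : forall s a, Q n.+1 s a <= Q n s a.
Proof.
elim: n => [|n IH] s a.
  rewrite QS.
  have hsup : sup (Sx (V 0) s a) <= c.
    apply: Sx_le => p hp.
    have : \sum_(s' in Sset s a) p s a s' * V 0 s' <= \sum_(s' in Sset s a) p s a s' * c.
      apply: ler_sum => s' _; rewrite ler_wpM2l //; first by case/andP: (hp01 _ hp s a s').
      apply: bigmax_le => //; exact: c_ge0.
    by rewrite -mulr_suml (hp1 _ hp) mul1r.
  have -> : Q 0 s a = c by [].
  have g0 : 0 <= gamma by case/andP: hg.
  have g1 : gamma < 1 by case/andP: hg.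
  have := hr s a => /andP [r0 r1].
  have : gamma * sup (Sx (V 0) s a) <= gamma * c by rewrite ler_wpM2l.
  have ec : c = 1 + gamma * c by rewrite /c; field; lra.
  lra.
have hV : forall s', V n.+1 s' <= V n s'.
  move=> s'; apply: bigmax_le; first exact: V_ge0.
  by move=> a' _; apply: le_trans (IH s' a') (Q_le_V _ _ _).
rewrite QS [X in _ <= X]QS lerD2l; apply: ler_wpM2l; first by case/andP: hg.
apply: Sx_le => p hp; apply: (le_trans _ (Sx_sup _ _ _ _ hp)).
apply: ler_sum => s' _; apply: ler_wpM2l; last exact: hV.
by case/andP: (hp01 _ hp s a s').
Qed.

Lemma Vmono n s : V n.+1 s <= V n s.
Proof.
apply: bigmax_le; first exact: V_ge0.
by move=> a' _; apply: le_trans (Qmono n s a') (Q_le_V _ _ _).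
Qed.

Lemma Vle n s : V n s <= c.
Proof.
elim: n => [|n IH]; last exact: le_trans (Vmono n s) IH.
apply: bigmax_le => //; exact: c_ge0.
Qed.

Lemma surv_ge0 (Pm : S -> S -> R) g n x : (forall x y, 0 <= Pm x y) -> 0 <= surv Pm g n x.
Proof.
move=> h; elim: n x => [|n IH] x /=; case: ifP => _ //.
by apply: sumr_ge0 => y _; rewrite mulr_ge0.
Qed.

Lemma claimC (pi : S -> A) g n : forall x,
  V n g - \sum_(j < n) surv (fun x y => pstar x (pi x) y) g j x <= V n x.
Proof.
set Pm := fun x y => pstar x (pi x) y.
have Pm0 : forall x y, 0 <= Pm x y by move=> x y; case/andP: (hp01 _ hP x (pi x) y).
have Pm1 : forall x, \sum_(y : S) Pm x y = 1.
  move=> x; rewrite -(hp1 _ hP x (pi x)) [RHS]big_mkcond /=; apply: eq_bigr => y _.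
  by case: ifP => // /negbT /hout.
have g0 : 0 <= gamma by case/andP: hg.
have g1 : gamma < 1 by case/andP: hg.
elim: n => [|n IH] x.
  by rewrite big_ord0 subr0.
case: (eqVneq x g) => [->|hx].
  rewrite big1 ?subr0 // => j _.
  by case: (nat_of_ord j) => [|j'] /=; rewrite eqxx.
rewrite big_ord_recl.
set Sxs := \sum_(i < n) _.
have eSx : Sxs = \sum_(i < n) \sum_(y : S) Pm x y * surv Pm g i y.
  rewrite /Sxs; apply: eq_bigr => i _ /=.
  by rewrite (negbTE hx) add0n.
have Sx0 : 0 <= Sxs by apply: sumr_ge0 => i _; exact: surv_ge0.
have h1 : \sum_(y : S) Pm x y * (V n g - \sum_(j < n) surv Pm g j y) <= \sum_(y : S) Pm x y * V n y.
  by apply: ler_sum => y _; rewrite ler_wpM2l.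
have h2 : \sum_(y : S) Pm x y * (V n g - \sum_(j < n) surv Pm g j y) = V n g - Sxs.
  rewrite eSx exchange_big /=.
  rewrite (eq_bigr (fun y => Pm x y * V n g - \sum_(j < n) Pm x y * surv Pm g j y)); last first.
    by move=> y _; rewrite mulrBr mulr_sumr.
  by rewrite sumrB -mulr_suml Pm1 mul1r.
have h3 : \sum_(y : S) Pm x y * V n y = \sum_(y in Sset x (pi x)) pstar x (pi x) y * V n y.
  rewrite [RHS]big_mkcond /=; apply: eq_bigr => y _.
  by case: ifP => // /negbT /hout; rewrite /Pm => ->; rewrite mul0r.
have h4 : r x (pi x) + gamma * (V n g - Sxs) <= V n.+1 x.
  apply: le_trans (Q_le_V _ _ (pi x)).
  rewrite QS lerD2l ler_wpM2l //.
  apply: (le_trans _ (Sx_sup _ _ _ _ hP)).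
  by rewrite -h3 -h2.
have h5 := Vmono n g.
have h6 := Vle n.+1 g.
have h7 : (1 - gamma) * V n.+1 g <= 1.
  have : (1 - gamma) * V n.+1 g <= (1 - gamma) * c by rewrite ler_wpM2l // subr_ge0 ltW.
  have ec : (1 - gamma) * c = 1 by rewrite /c; field; lra.
  by rewrite ec.
have h8 : gamma * V n.+1 g <= gamma * V n g by rewrite ler_wpM2l.
have h9 : gamma * Sxs <= Sxs by rewrite ler_piMl // ltW.
have := hr x (pi x) => /andP [r0 _].
rewrite mulrBr in h4.
have -> : surv Pm g 0 x = 1 by rewrite /= (negbTE hx).
lra.
Qed.

End DV.
Theorem lemma7 (R : realType) (S A : finType) (d : nat)
  (phi : S -> A -> S -> 'cV[R]_d) (Sset : S -> A -> {set S})
  (r : S -> A -> R) (theta_star : 'cV[R]_d) (L_theta : R)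
  (thetahat : nat -> 'cV[R]_d) (Sigma : nat -> 'M[R]_d) (beta : nat -> R)
  (T : nat) (gamma : R) (N : nat) (D : R) (t_k : nat) :
  (forall s a, Sset s a != finset.set0) ->
  (forall s a, 0 <= r s a <= 1) ->
  0 <= gamma < 1 ->
  norm2 theta_star <= L_theta ->
  (forall t, (1 <= t <= T)%N -> posdef (Sigma t)) ->
  (forall t, (1 <= t <= T)%N -> mnorm (Sigma t) (thetahat t - theta_star) <= beta t) ->
  (diameter (mnl phi Sset theta_star) <= D%:E)%E ->
  (1 <= t_k <= T)%N ->
  forall s s' : S,
    devi_V r Sset (in_polytope phi Sset (thetahat t_k) (Sigma t_k) (beta t_k)) gamma N s
    - devi_V r Sset (in_polytope phi Sset (thetahat t_k) (Sigma t_k) (beta t_k)) gamma N s'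
    <= D.
Proof.
move=> hne hr hg _ hpos hbeta hdiam ht s s'.
set P := in_polytope phi Sset (thetahat t_k) (Sigma t_k) (beta t_k).
set pstar := mnl phi Sset theta_star.
have hP : P pstar := pstar_in phi Sset theta_star (thetahat t_k) (Sigma t_k) (beta t_k) hne (hpos _ ht) (hbeta _ ht).
have hp01 : forall p, P p -> forall s a s', 0 <= p s a s' <= 1 by move=> p [].
have hp1 : forall p, P p -> forall s a, \sum_(s' in Sset s a) p s a s' = 1.
  by move=> p [_ h] s0 a; case: (h s0 a).
have hout : forall s a s', s' \notin Sset s a -> pstar s a s' = 0.
  by move=> s0 a s0' h; rewrite /pstar /mnl (negbTE h).
have D0 : (0%:E <= D%:E)%E.
  apply: le_trans hdiam; exact: bigmax_ge_id.
rewrite lee_fin in D0.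
case: (eqVneq s s') => [<-|hss]; first by rewrite subrr.
have [pi hpi] : exists pi : {ffun S -> A},
    (hit_time (fun x y => pstar x (pi x) y) s' s <= D%:E)%E.
  case: (pselect (exists pi : {ffun S -> A},
    (hit_time (fun x y => pstar x (pi x) y) s' s <= D%:E)%E)) => // hno.
  exfalso.
  have hlt : (D%:E < \big[Order.min/+oo%E]_(pi : {ffun S -> A})
                hit_time (fun x y => pstar x (pi x) y) s' s)%E.
    apply/bigmin_gtP; split; first by rewrite ltey.
    move=> pi _; rewrite ltNge; apply/negP => h; apply: hno; by exists pi.
  have hle : (\big[Order.min/+oo%E]_(pi : {ffun S -> A})
                hit_time (fun x y => pstar x (pi x) y) s' s <= D%:E)%E.
    apply: le_trans hdiam; rewrite /diameter.
    apply: le_trans (le_bigmax _ _ s').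
    by apply: (bigmax_sup s).
  by have := lt_le_trans hlt hle; rewrite ltxx.
have hc := claimC r Sset P gamma pstar hr hg hP hp01 hp1 hout pi s N s'.
rewrite /= in hc.
have hs : \sum_(j < N) surv (fun x y => pstar x (pi x) y) s j s' <= D.
  rewrite -lee_fin; apply: le_trans hpi.
  rewrite /hit_time -sumEFin -(big_mkord (fun _ => true) (fun j => (surv (fun x y => pstar x (pi x) y) s j s')%:E)).
  apply: nneseries_lim_ge => n _ _; rewrite lee_fin; apply: surv_ge0.
  by move=> x y; case/andP: (hp01 _ hP x (pi x) y).
rewrite /devi_V -/P.
lra.
Qed.
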